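(* Let $n\ge 1$, let $C_u(v_1),\ldots,C_u(v_n)>0$, $C_d(v_1),\ldots,C_d(v_n)>0$ and $R_1,\ldots,R_n>0$ be sustainable, i.e. $R_i\le C_u(v_i)$ for all $i$, $\sum_{j\ne i}R_j\le C_d(v_i)$ for all $i$, and $(n-1)\sum_{i=1}^n R_i\le\sum_{i=1}^n C_u(v_i)$. Then the output $r_{i,j}$ of the algorithm described in the context satisfies the Downlink Capacity Constraint: for every $1\le k\le n$, $$\sum_{i\neq k}\sum_{j=1}^n r_{i,j} \leq C_d(v_k),$$ i.e. the aggregate rate of all sub-streams received by $v_k$ under the two-level broadcast trees described in the context is at most $C_d(v_k)$.
   Context: Sub-stream rate assigning algorithm. Input: $n$, uplink capacities $C_u(v_1),\ldots,C_u(v_n)$ and rates $R_1,\ldots,R_n$. Initialize $r_{i,j}:=0$ for all $1\le i,j\le n$ and $U_i := C_u(v_i)-R_i$ for $1\le i\le n$. Outer loop: for $i=1$ to $n$: set $R'_i := R_i$; inner loop: for $j=1$ to $n$: if $(n-2)R'_i > U_j$ then set $r_{i,j} := U_j/(n-2)$, else set $r_{i,j} := R'_i$; then set $U_j := U_j-(n-2)r_{i,j}$ and $R'_i := R'_i - r_{i,j}$; if $R'_i = 0$, exit the inner loop. Output all $r_{i,j}$. Interpretation: $r_{i,j}$ is the rate of sub-stream $s_{i,j}$ of site $v_i$'s data stream. Sub-stream $s_{i,i}$ is sent by $v_i$ directly to all other sites; for $j\ne i$, $s_{i,j}$ is sent from $v_i$ to $v_j$ and $v_j$ forwards it to the remaining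 $n-2$ sites. Thus every site other than $v_i$ receives each sub-stream $s_{i,j}$ exactly once, consuming $r_{i,j}$ of its downlink, and a site does not use its downlink for its own sub-streams. *)

(* Defs.v *)
From HB Require Import structures.
From mathcomp Require Import all_boot all_order all_algebra.
Set Implicit Arguments. Unset Strict Implicit. Unset Printing Implicit Defensive.
Import Order.TTheory GRing.Theory Num.Theory.
Local Open Scope ring_scope.

(* Sites v_1..v_n are indexed by 'I_n (0-based). Loops "for i = 1 to n"
   traverse enum 'I_n, i.e. 0, 1, ..., n-1 in increasing order. *)

Section Algo.
Variables (R : realFieldType) (n : nat).

Definition upd (f : 'I_n -> R) (j : 'I_n) (v : R) : 'I_n -> R :=
  fun k => if k == j then v else f k.

(* state of the inner loop: (U, R'_i, row r_{i,.}, exited?) *)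
Definition inner_state := (('I_n -> R) * R * ('I_n -> R) * bool)%type.

Definition inner_step (st : inner_state) (j : 'I_n) : inner_state :=
  let: (U, Rp, row, ex) := st in
  if ex then st else
  let c : R := n%:R - 2 in
  let rij := if c * Rp > U j then U j / c else Rp in
  let U' := upd U j (U j - c * rij) in
  let Rp' := Rp - rij in
  (U', Rp', upd row j rij, Rp' == 0).

Definition inner_loop (U : 'I_n -> R) (Ri : R) : ('I_n -> R) * ('I_n -> R) :=
  let: (U', _, row, _) := foldl inner_step (U, Ri, (fun _ => 0), false) (enum 'I_n) in
  (U', row).

Definition outer_step (Rr : 'I_n -> R)
    (st : ('I_n -> R) * ('I_n -> 'I_n -> R)) (i : 'I_n)
  : ('I_n -> R) * ('I_n -> 'I_n -> R) :=
  let: (U, r) := st in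
  let: (U', row) := inner_loop U (Rr i) in
  (U', fun i' j => if i' == i then row j else r i' j).

Definition substream_rates (Cu Rr : 'I_n -> R) : 'I_n -> 'I_n -> R :=
  (foldl (outer_step Rr) ((fun i => Cu i - Rr i), (fun _ _ => 0)) (enum 'I_n)).2.

End Algo.

(* Main.v *)
Require Import Defs.
From HB Require Import structures.
From mathcomp Require Import all_boot all_order all_algebra.
From mathcomp Require Import lra zify.
Import Order.TTheory GRing.Theory Num.Theory.
Local Open Scope ring_scope.

Section Proofs.
Variables (R : realFieldType) (n : nat).
Hypothesis hc : 0 <= (n%:R - 2 : R).

Definition inv_in (Ri : R) (st : inner_state R n) :=
  let: (U, Rp, row, ex) := st in
  (forall j, 0 <= U j) /\ 0 <= Rp /\ (forall j, 0 <= row j) /\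
  \sum_j row j + Rp <= Ri.

Lemma inner_step_inv Ri st j : inv_in Ri st -> inv_in Ri (inner_step st j).
Proof.
case: st => [[[U Rp] row] ex] /= [hU [hR [hrow hs]]].
case: ex => //.
set c : R := n%:R - 2.
set rij := (if _ then _ else _).
have [h0 [h1 h2]] : 0 <= rij /\ rij <= Rp /\ 0 <= U j - c * rij.
  rewrite /rij; case: ifP => h.
  - have cpos : 0 < c.
      rewrite lt_def hc andbT; apply/negP => /eqP c0.
      by move: h; rewrite c0 mul0r ltNge hU.
    split; first by apply: divr_ge0 => //; apply: ltW.
    split; first by rewrite ler_pdivrMr // mulrC ltW.
    by rewrite mulrC divfK ?subrr // gt_eqF.
  - split=> //; split=> //.
    by rewrite subr_ge0 leNgt h.
split.
  by move=> k; rewrite /upd; case: eqP => // ->.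
split; first lra.
split.
  by move=> k; rewrite /upd; case: eqP.
rewrite (bigD1 j) //= /upd eqxx.
rewrite (eq_bigr row); last by move=> k /negbTE ->.
move: hs; rewrite (bigD1 j) //=.
have := hrow j; lra.
Qed.

Lemma foldl_inv Ri s (st : inner_state R n) : inv_in Ri st -> (inv_in Ri (foldl (@inner_step R n) st s)).
Proof.
elim: s st => //= a s IH st h; apply: IH; exact: inner_step_inv.
Qed.

Lemma inner_res (U : 'I_n -> R) (Ri : R) : (forall j, 0 <= U j) -> 0 <= Ri ->
  (forall j, 0 <= (inner_loop U Ri).1 j) /\ \sum_j (inner_loop U Ri).2 j <= Ri.
Proof.
move=> hU hRi; rewrite /inner_loop.
have := @foldl_inv Ri (enum 'I_n) (U, Ri, (fun _ => 0), false).
case: foldl => [[[U' Rp] row] ex] /= H.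
have [|hU' [hRp [_ hs]]] := H.
  split=> //; split=> //; split=> //.
  by rewrite big1 ?add0r.
split=> //; by apply: le_trans hs; rewrite lerDl.
Qed.

Lemma outer_inv (Rr : 'I_n -> R) (hRr : forall i, 0 <= Rr i) s st :
  (forall j, 0 <= st.1 j) -> (forall i, \sum_j st.2 i j <= Rr i) ->
  let st' := foldl (outer_step Rr) st s in
  (forall j, 0 <= st'.1 j) /\ (forall i, \sum_j st'.2 i j <= Rr i).
Proof.
elim: s st => //= a s IH [U r] /= hU hr; apply: IH.
  rewrite /outer_step; have := inner_res U (Rr a) hU (hRr a).
  by case: inner_loop => U' row /= [].
rewrite /outer_step; have := inner_res U (Rr a) hU (hRr a).
case: inner_loop => U' row /= [_ hs] i.
by case: eqP => [->|_].
Qed.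

End Proofs.

Theorem propositionB6 (R : realFieldType) (n : nat) (Cu Cd Rr : 'I_n -> R) :
  (1 <= n)%N ->
  (forall i, 0 < Cu i) -> (forall i, 0 < Cd i) -> (forall i, 0 < Rr i) ->
  (forall i, Rr i <= Cu i) ->
  (forall i, \sum_(j | j != i) Rr j <= Cd i) ->
  (n%:R - 1) * \sum_i Rr i <= \sum_i Cu i ->
  forall k : 'I_n,
    \sum_(i | i != k) \sum_j substream_rates Cu Rr i j <= Cd k.
Proof.
move=> hn hCu hCd hRr hRC hD _ k.
have [n1|n2] := leqP n 1.
  rewrite big1; first exact: ltW.
  move=> i /eqP hik; exfalso; apply: hik; apply: val_inj.
  have := ltn_ord i; have := ltn_ord k; rewrite /=; lia.
have hc : 0 <= (n%:R - 2 : R).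
  by rewrite subr_ge0 (ler_nat R 2 n).
have := @outer_inv R n hc Rr (fun i => ltW (hRr i)) (enum 'I_n)
   ((fun i => Cu i - Rr i), (fun _ _ => 0)).
case=> [j|i|_ hs]; first by rewrite subr_ge0.
  by rewrite big1 // ltW.
apply: le_trans (hD k).
apply: ler_sum => i _; exact: hs.
Qed.
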